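(* Let $G$ be a graph of order $n$, not isomorphic to $K_n$. If $W$ is a $\tau$-set of $G$ such that $G[W]\cong K_{\tau}$ (where $\tau=\tau(G)$), then $\beta_p(G)\ge\tau(G)+1$.
   Context: All graphs are finite, simple, undirected and connected. Two vertices $u,v$ are twins if $N(u)\setminus\{v\}=N(v)\setminus\{u\}$; the twin number $\tau(G)$ is the maximum cardinality of an equivalence class of the twin relation; a $\tau$-set is a set of pairwise twin vertices of cardinality $\tau(G)$. For a partition $\Pi=\{S_1,\dots,S_k\}$ of $V(G)$, $r(u|\Pi)=(d(u,S_1),\dots,d(u,S_k))$ with $d(u,S)=\min_{w\in S}d(u,w)$; $\Pi$ is locating if $r(u|\Pi)\ne r(v|\Pi)$ for all distinct $u,v$; $\beta_p(G)$ is the minimum size of a locating partition. *)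

(* Defs.v *)
From mathcomp Require Import all_boot.
Set Implicit Arguments. Unset Strict Implicit. Unset Printing Implicit Defensive.

Section Graph.
Variables (T : finType) (e : rel T).

Definition simple_graph := symmetric e /\ irreflexive e.
Definition connected_graph := forall u v : T, connect e u v.

Fixpoint reach (k : nat) (u v : T) : bool :=
  if k is k'.+1 then (u == v) || [exists w, e u w && reach k' w v]
  else u == v.

(* graph distance: least k with v reachable from u within k steps
   (in a connected graph this is < #|T|) *)
Definition dist (u v : T) : nat := find (fun k => reach k u v) (iota 0 #|T|).

(* d(u,S) = min_{w in S} d(u,w)  (used only for nonempty S) *)
Definition setdist (u : T) (S : {set T}) : nat :=
  \big[minn/#|T|]_(w in S) dist u w.

Definition locating (P : {set {set T}}) : bool :=
  partition P [set: T] &&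
  [forall u, forall v, (u != v) ==> [exists S in P, setdist u S != setdist v S]].

(* partition dimension beta_p(G): minimum size of a locating partition
   (the singleton partition is locating and has size #|T|) *)
Definition betap : nat :=
  \big[minn/#|T|]_(P : {set {set T}} | locating P) #|P|.

Definition twin (u v : T) : bool :=
  [set w | e u w] :\ v == [set w | e v w] :\ u.

Definition twin_class (u : T) : {set T} := [set v | twin u v].
Definition tau : nat := \max_(u : T) #|twin_class u|.

Definition tau_set (W : {set T}) : bool :=
  [forall u in W, forall v in W, twin u v] && (#|W| == tau).

Definition is_clique (W : {set T}) : bool :=
  [forall u in W, forall v in W, (u != v) ==> e u v].

Definition complete_graph : bool := [forall u, forall v, (u != v) ==> e u v].
End Graph.

(* Main.v *)
Require Import Defs.
From mathcomp Require Import all_boot.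
Set Implicit Arguments. Unset Strict Implicit. Unset Printing Implicit Defensive.

Lemma reach_mono (T : finType) (e : rel T) k a b : reach e k a b -> reach e k.+1 a b.
Proof.
elim: k a => [|k IH] a /=; first by move=> ->.
case/orP=> [->//|/existsP [w /andP [Haw Hw]]].
apply/orP; right; apply/existsP; exists w; rewrite Haw /=; exact: IH.
Qed.

Lemma twin_reach (T : finType) (e : rel T) u v z k :
  irreflexive e -> twin e u v -> z != u -> reach e k u z -> reach e k v z.
Proof.
move=> Hirr /eqP Htw Hzu.
case: k => [|k] /=; first by rewrite eq_sym (negbTE Hzu).
rewrite eq_sym (negbTE Hzu) /= => /existsP [w /andP [Huw Hw]].
have [Ewv|Hwv] := eqVneq w v; first by rewrite -Ewv; exact: reach_mono.
apply/orP; right; apply/existsP; exists w; rewrite Hw andbT.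
have : w \in [set w | e u w] :\ v by rewrite !inE Hwv Huw.
rewrite Htw !inE => /andP [_ ->] //.
Qed.

Lemma twin_sym (T : finType) (e : rel T) u v : twin e u v -> twin e v u.
Proof. by rewrite /twin eq_sym. Qed.

Lemma twin_dist (T : finType) (e : rel T) u v z :
  irreflexive e -> twin e u v -> z != u -> z != v -> dist e u z = dist e v z.
Proof.
move=> Hirr Ht Hzu Hzv; rewrite /dist; apply: eq_find => k.
apply/idP/idP; first exact: twin_reach.
apply: twin_reach => //; exact: twin_sym.
Qed.

Lemma dist_self (T : finType) (e : rel T) u : dist e u u = 0.
Proof.
rewrite /dist; have : 0 < #|T| by apply/card_gt0P; exists u.
case: #|T| => [//|n] _ /=; by rewrite eqxx.
Qed.

Lemma dist_gt0 (T : finType) (e : rel T) u w : u != w -> 0 < dist e u w.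
Proof.
move=> Huw; rewrite /dist; have : 0 < #|T| by apply/card_gt0P; exists u.
case: #|T| => [//|n] _ /=; by rewrite (negbTE Huw).
Qed.

Lemma dist_one (T : finType) (e : rel T) u w : u != w -> e u w -> dist e u w = 1.
Proof.
move=> Huw Heuw; rewrite /dist.
have : 1 < #|T|.
  rewrite (cardD1 u) (cardD1 w) !inE eq_sym Huw //.
case: #|T| => [//|[//|n]] _ /=; rewrite (negbTE Huw) /=.
suff -> : [exists w0, e u w0 && (w0 == w)] by [].
by apply/existsP; exists w; rewrite Heuw eqxx.
Qed.

Lemma bigmin_seq_le (I : eqType) (r : seq I) (P : pred I) (F : I -> nat) x j :
  j \in r -> P j -> \big[minn/x]_(i <- r | P i) F i <= F j.
Proof.
move=> + Pj; elim: r => [//|a r IH]; rewrite in_cons big_cons.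
case/orP=> [/eqP <-|Hj]; first by rewrite Pj geq_minl.
case: (P a); last exact: IH.
exact: leq_trans (geq_minr _ _) (IH Hj).
Qed.

Lemma bigmin_set_le (T : finType) (S : {set T}) (F : T -> nat) x j :
  j \in S -> \big[minn/x]_(i in S) F i <= F j.
Proof. by move=> Hj; apply: bigmin_seq_le; rewrite ?mem_index_enum. Qed.

Lemma setdist0 (T : finType) (e : rel T) u (S : {set T}) : u \in S -> setdist e u S = 0.
Proof. by move=> Hu; apply/eqP; rewrite -leqn0 -(dist_self e u); apply: bigmin_set_le. Qed.

Lemma setdist_le (T : finType) (e : rel T) u w (S : {set T}) : w \in S -> setdist e u S <= dist e u w.
Proof. exact: bigmin_set_le. Qed.

Lemma setdist_gt0 (T : finType) (e : rel T) u (S : {set T}) : u \notin S -> 0 < setdist e u S.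
Proof.
move=> Hu; rewrite /setdist; apply: (big_ind (fun m => 0 < m)).
- by apply/card_gt0P; exists u.
- by move=> a b Ha Hb; rewrite leq_min Ha Hb.
- move=> w Hw; apply: dist_gt0; apply: contraNneq Hu => ->; exact: Hw.
Qed.

Lemma setdist_twin (T : finType) (e : rel T) u v (S : {set T}) :
  irreflexive e -> twin e u v -> u \notin S -> v \notin S -> setdist e u S = setdist e v S.
Proof.
move=> Hirr Ht Hu Hv; rewrite /setdist; apply: eq_bigr => w Hw.
apply: twin_dist => //.
- by apply: contraNneq Hu => <-.
- by apply: contraNneq Hv => <-.
Qed.

Lemma setdist_one (T : finType) (e : rel T) u w (S : {set T}) :
  u \notin S -> w \in S -> e u w -> setdist e u S = 1.
Proof.
move=> Hu Hw Huw; apply/eqP; rewrite eqn_leq setdist_gt0 // andbT.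
rewrite -(@dist_one _ e u w) ?setdist_le //.
by apply: contraNneq Hu => ->.
Qed.

Theorem proposition15 (T : finType) (e : rel T) :
  simple_graph e -> connected_graph e ->
  ~~ complete_graph e ->
  forall W : {set T}, tau_set e W -> is_clique e W ->
  (tau e).+1 <= betap e.
Proof.
move=> [Hsym Hirr] Hconn Hncomp W /andP [/forallP Htw /eqP HW] /forallP Hcl.
have twW : forall u v, u \in W -> v \in W -> twin e u v.
  move=> u v Hu Hv; have := Htw u; rewrite Hu /= => /forallP /(_ v).
  by rewrite Hv.
have clW : forall u v, u \in W -> v \in W -> u != v -> e u v.
  move=> u v Hu Hv Huv; have := Hcl u; rewrite Hu /= => /forallP /(_ v).
  by rewrite Hv Huv.
move/forallPn: Hncomp => [u0 /forallPn [v0]]; rewrite negb_imply => /andP [Huv0 Hne0].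
have [y Hy] : exists y, y \notin W.
  case Hu0: (u0 \in W); last by exists u0; rewrite Hu0.
  exists v0; apply/negP => Hv0; by rewrite (clW u0 v0) in Hne0.
have [w0 Hw0] : exists w0, w0 \in W.
  apply/card_gt0P; rewrite HW.
  apply: (@leq_trans #|twin_class e u0|); last exact: (leq_bigmax u0).
  by apply/card_gt0P; exists u0; rewrite inE /twin eqxx.
have Hex : [exists x, exists w, (x \notin W) && (w \in W) && e w x].
  apply: contraT; rewrite negb_exists => /forallP Hn.
  have Hno : forall x w, x \notin W -> w \in W -> ~~ e w x.
    move=> x w Hx Hw; have := Hn x; rewrite negb_exists => /forallP /(_ w).
    by rewrite Hx Hw.
  have Hcl' : closed e W.
    move=> a b Hab; case Ha: (a \in W); case Hb: (b \in W) => //.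
    - by have := Hno b a; rewrite Ha Hb Hab => /(_ isT isT).
    - by have := Hno a b; rewrite Ha Hb -(Hsym a b) Hab => /(_ isT isT).
  have := closed_connect Hcl' (Hconn w0 y); rewrite Hw0 (negbTE Hy) //.
case/existsP: Hex => x /existsP [w1 /andP [/andP [Hx Hw1] Hw1x]].
have adjx : forall w, w \in W -> e x w.
  move=> w Hw; have [<-|Hww] := eqVneq w1 w; first by rewrite Hsym.
  have /eqP Ht := twW w1 w Hw1 Hw.
  have : x \in [set z | e w1 z] :\ w.
    rewrite !inE Hw1x andbT; by apply: contraNneq Hx => ->.
  by rewrite Ht !inE Hsym => /andP [_ ->].
rewrite /betap; apply: (big_ind (fun m => (tau e).+1 <= m)).
- rewrite -HW; apply: (@leq_trans #|x |: W|); last exact: max_card.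
  by rewrite cardsU1 Hx.
- by move=> a b Ha Hb; rewrite leq_min Ha Hb.
move=> P /andP [Hpart /forallP Hloc].
case/and3P: Hpart => /eqP Hcov Htriv _.
pose f := pblock P.
have fin : forall z, f z \in P by move=> z; apply: pblock_mem; rewrite Hcov inE.
have zin : forall z, z \in f z by move=> z; rewrite mem_pblock Hcov inE.
have blk : forall S z, S \in P -> z \in S -> f z = S.
  by move=> S z HS Hz; apply: def_pblock.
have contra : forall u v, u != v -> (forall S, S \in P -> setdist e u S = setdist e v S) -> False.
  move=> u v Huv H; have := Hloc u; move/forallP/(_ v); rewrite Huv /=.
  by case/existsP => S /andP [HS]; rewrite H // eqxx.
have inj : {in W &, injective f}.
  move=> w w' Hw Hw' Hf; apply/eqP/negPn/negP => Hne.
  apply: (contra w w' Hne) => S HS.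
  case Hws: (w \in S).
    have Hw's : w' \in S by rewrite -(blk S w) // Hf.
    by rewrite !setdist0.
  have Hw's : w' \notin S.
    by apply/negP => Hw's; move: Hws; rewrite -(blk S w') // -Hf zin.
  apply: setdist_twin => //; [exact: twW | by rewrite Hws].
rewrite ltnNge; apply/negP => Hle.
have Himg : f @: W = P.
  apply/eqP; rewrite eqEcard card_in_imset // HW Hle andbT.
  by apply/subsetP => S /imsetP [w _ ->].
have /imsetP [w Hw Hfw] : f x \in f @: W by rewrite Himg.
apply: (contra x w); first by apply: contraNneq Hx => ->.
move=> S HS.
case Hxs: (x \in S).
  have Hws : w \in S by rewrite -(blk S x) // Hfw.
  by rewrite !setdist0.
have Hws : w \notin S.
  by apply/negP => Hws; move: Hxs; rewrite -(blk S w) // -Hfw zin.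
move: HS Hxs Hws; rewrite -Himg => /imsetP [w' Hw' ->] Hxs Hws.
rewrite (@setdist_one _ e x w') ?(@setdist_one _ e w w') ?zin ?Hxs ?adjx //.
apply: clW => //; by apply: contraNneq Hws => ->.
Qed.
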